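(* For every integer $n\ge0$, \[ \sum_{k=0}^n B_{n-k}^{(-k)} = \frac{(-1)^{n+1}}{2}\sum_{j=1}^{n+1}(-1)^j\, j!\, \left\{ {n+1 \atop j} \right\}\frac{\binom{2j}{j}}{3^{j-1}}\sum_{i=0}^{j-1}\frac{3^i}{(2i+1)\binom{2i}{i}}. \]
   Context: $\left\{ {n \atop j} \right\}$ denotes the Stirling number of the second kind. For an integer $k$, $\mathrm{Li}_k(z)=\sum_{m\ge1} z^m/m^k$, and the poly-Bernoulli numbers $B_n^{(k)}\in\mathbb{Q}$ are defined by $\sum_{n\ge0} B_n^{(k)} \frac{t^n}{n!} = \frac{\mathrm{Li}_k(1-e^{-t})}{1-e^{-t}}$. *)

(* Defs.v *)
From mathcomp Require Import all_boot all_order all_algebra.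
Set Implicit Arguments. Unset Strict Implicit. Unset Printing Implicit Defensive.
Import Order.TTheory GRing.Theory Num.Theory.
Local Open Scope ring_scope.

Fixpoint stirling2 (n j : nat) : nat :=
  match n, j with
  | 0, 0 => 1
  | 0, _.+1 => 0
  | _.+1, 0 => 0
  | n'.+1, j'.+1 => (j'.+1 * stirling2 n' j'.+1 + stirling2 n' j')%N
  end.

Definition one_minus_exp_neg_trunc (N : nat) : {poly rat} :=
  \sum_(1 <= i < N.+1) ((-1) ^+ i.+1 / (i`!)%:R) *: 'X^i.

(* Coefficient of t^n in the formal power series (1 - e^{-t})^e; since 1-e^{-t}
   has no constant term, it only depends on the truncation at degree n. *)
Definition coef_pow_one_minus_exp_neg (e n : nat) : rat :=
  ((one_minus_exp_neg_trunc n) ^+ e)`_n.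

(* Poly-Bernoulli numbers B_n^{(k)}, k : int, defined by
     sum_n B_n^{(k)} t^n/n! = Li_k(1-e^{-t})/(1-e^{-t})
                            = sum_{m>=1} (1-e^{-t})^(m-1) / m^k.
   Only m <= n+1 contribute to the coefficient of t^n. *)
Definition polyBernoulli (n : nat) (k : int) : rat :=
  (n`!)%:R * \sum_(1 <= m < n.+2)
     (((m%:R : rat) ^ (- k)) * coef_pow_one_minus_exp_neg m.-1 n).

(* Main.v *)
Require Import Defs.
From mathcomp Require Import all_boot all_order all_algebra.
From mathcomp Require Import ring lra zify.
Import Order.TTheory GRing.Theory Num.Theory.

Lemma stirSS n j : stirling2 n.+1 j.+1 = j.+1 * stirling2 n j.+1 + stirling2 n j.
Proof. by []. Qed.
Lemma stirS0 n : stirling2 n.+1 0 = 0. Proof. by []. Qed.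

Lemma stirling2_gt a j : a < j -> stirling2 a j = 0.
Proof.
elim: a j => [|a IH] [|j] //= H.
by rewrite !IH ?muln0 // ltnW.
Qed.

Lemma stir_binom a e :
  stirling2 a.+1 e.+1 = \sum_(0 <= b < a.+1) 'C(a, b) * stirling2 b e.
Proof.
elim: a e => [|a IH] e.
  by rewrite big_nat1 stirSS (@stirling2_gt 0 e.+1) // muln0 add0n mul1n.
rewrite stirSS (big_nat_recl _ _ _ (leq0n a.+1)).
under eq_bigr do rewrite binS mulnDl.
rewrite big_split.
have E1 : 'C(a.+1, 0) * stirling2 0 e + \sum_(0 <= i < a.+1) 'C(a, i.+1) * stirling2 i.+1 e
        = stirling2 a.+1 e.+1.
  rewrite IH (big_nat_recr _ _ _ (leq0n a)) (bin_small (ltnSn a)) mul0n Monoid.simpm.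
  by rewrite [RHS](big_nat_recl _ _ _ (leq0n a)) !bin0.
rewrite addnA E1.
case: e IH E1 => [|e] IH E1.
  rewrite big1 ?addn0 ?muln0 ?mul1n //.
  by move=> i _; rewrite stirS0 muln0.
have -> : \sum_(0 <= i < a.+1) 'C(a, i) * stirling2 i.+1 e.+1
   = e.+1 * stirling2 a.+1 e.+2 + stirling2 a.+1 e.+1.
  rewrite [in RHS]IH [X in _ = _ + X]IH big_distrr -big_split.
  apply: eq_bigr => i _; rewrite stirSS /=; ring.
ring.
Qed.

Lemma stir_binom' a e :
  \sum_(0 <= b < a) 'C(a, b) * stirling2 b e = e.+1 * stirling2 a e.+1.
Proof.
case: a => [|a]; first by rewrite big_geq // (@stirling2_gt 0 e.+1) // muln0.
have := stir_binom a.+1 e.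
rewrite big_nat_recr //= binn mul1n => H.
lia.
Qed.
Local Open Scope ring_scope.

Lemma fact_neq0 n : (n`!)%:R != 0 :> rat.
Proof. by rewrite pnatr_eq0 -lt0n fact_gt0. Qed.

Lemma coef_p N k : (one_minus_exp_neg_trunc N)`_k =
  if (0 < k)%N && (k <= N)%N then (-1)^+k.+1 / (k`!)%:R else 0.
Proof.
rewrite /one_minus_exp_neg_trunc coef_sum.
under eq_bigr do rewrite coefZ coefXn.
case: ifP => [/andP[k0 kN]|hk].
  rewrite (bigD1_seq k) /= ?mem_index_iota ?iota_uniq ?k0 ?ltnS //.
  rewrite eqxx mulr1 big1 ?addr0 // => i /negbTE; rewrite eq_sym => ->.
  by rewrite mulr0.
rewrite big1_seq // => i; rewrite mem_index_iota => /andP[_ iN].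
case: eqP => [ki|]; last by rewrite mulr0.
by move: hk; rewrite ki -ltnS iN.
Qed.

Lemma coef_pow N e b : (b <= N)%N ->
  ((one_minus_exp_neg_trunc N) ^+ e)`_b =
  (-1)^+(b+e) * (e`!)%:R * (stirling2 b e)%:R / (b`!)%:R.
Proof.
elim: e b => [|e IH] b bN.
  rewrite expr0 coef1 addn0 fact0 mulr1.
  case: b bN => [|b] _ /=; first by rewrite fact0 expr0 divr1 mulr1.
  by rewrite mulr0 mul0r.
rewrite exprSr coefM big_ord_recr /= subnn coef_p /= mulr0 addr0.
have H := stir_binom' b e.
have -> : (stirling2 b e.+1)%:R = ((e.+1 * stirling2 b e.+1)%N%:R) / (e.+1)%:R :> rat.
  by rewrite natrM mulrAC divff ?mul1r // pnatr_eq0.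
rewrite -H natr_sum factS natrM.
rewrite !mulr_suml mulr_sumr mulr_suml.
rewrite big_mkord.
apply: eq_bigr => j _; have hj := ltn_ord j.
rewrite IH; last by apply: leq_trans bN; apply: ltnW.
rewrite coef_p subn_gt0 hj /= (leq_trans (leq_subr _ _) bN).
have hC : ('C(b,j))%:R = (b`!)%:R / ((j`!)%:R * ((b-j)`!)%:R) :> rat.
  by rewrite -(bin_fact (ltnW hj)) !natrM mulfK // mulf_neq0 // fact_neq0.
have sgn : (-1)^+(j+e) * (-1)^+(b-j).+1 = (-1)^+(b+e).+1 :> rat.
  by rewrite -exprD; congr (_ ^+ _); lia.
rewrite natrM hC addnS -sgn.
have := fact_neq0 j; have := fact_neq0 (b - j); have := fact_neq0 b.
have : (e.+1)%:R != 0 :> rat by rewrite pnatr_eq0.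
move=> h1 h2 h3 h4; field.
by rewrite h2 h3 h4 nat1r h1.
Qed.
Local Open Scope ring_scope.

Definition st (a j : nat) : rat := (-1) ^+ (a + j) * (stirling2 a j)%:R.

Lemma PB a k : polyBernoulli a (- (k%:Z)) =
  \sum_(0 <= j < a.+1) (j`!)%:R * st a j * ((j.+1)%:R ^+ k).
Proof.
rewrite /polyBernoulli opprK big_add1 /= mulr_sumr.
apply: eq_bigr => j _.
rewrite -exprnP /coef_pow_one_minus_exp_neg /= coef_pow // /st.
have := fact_neq0 a => h.
by field.
Qed.
Local Open Scope ring_scope.

Lemma st_rec n m : st n.+1 m.+1 = st n m - (m.+1)%:R * st n m.+1.
Proof.
rewrite /st stirSS natrD natrM addSn addnS !exprS; ring.
Qed.

Lemma st_gt a j : (a < j)%N -> st a j = 0.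
Proof. by move=> h; rewrite /st stirling2_gt // mulr0. Qed.

Definition rr (c : rat) (j m : nat) := \prod_(j.+1 <= i < m) (c + i%:R).

Lemma rr_j c j : rr c j j.+1 = 1.
Proof. by rewrite /rr big_geq. Qed.

Lemma rr_S c j m : (j < m)%N -> rr c j m.+1 = rr c j m * (c + m%:R).
Proof. by move=> h; rewrite /rr big_nat_recr. Qed.

Lemma starA (c : rat) j n :
  \sum_(0 <= a < n.+1) st a j * c ^+ (n - a) =
  \sum_(j.+1 <= m < n.+2) st n.+1 m * rr c j m.
Proof.
elim: n => [|n IH].
  rewrite big_nat1 subnn expr0 mulr1.
  case: j => [|j].
    by rewrite big_nat1 rr_j mulr1 /st.
  by rewrite big_geq // st_gt.
case: (ltnP n.+1 j) => hj.
  rewrite [RHS]big_geq; last by lia.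
  rewrite big1_seq // => a; rewrite mem_index_iota => /andP[_ ha].
  by rewrite st_gt ?mul0r //; lia.
rewrite big_nat_recr //= subnn expr0 mulr1.
have -> : \sum_(0 <= i < n.+1) st i j * c ^+ (n.+1 - i)
        = c * \sum_(0 <= i < n.+1) st i j * c ^+ (n - i).
  rewrite mulr_sumr big_nat_cond [RHS]big_nat_cond.
  apply: eq_bigr => i /andP[/andP[_ hi] _].
  by rewrite subSn // exprS; ring.
rewrite IH big_add1 /=.
rewrite [RHS](eq_bigr (fun i => st n.+1 i * rr c j i.+1 - (i.+1)%:R * st n.+1 i.+1 * rr c j i.+1)); last first.
  by move=> i _; rewrite st_rec; ring.
rewrite sumrB.
rewrite (@big_ltn _ _ _ j n.+2); last by lia.
rewrite rr_j mulr1 -addrA.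
have -> : \sum_(j.+1 <= i < n.+2) st n.+1 i * rr c j i.+1
   - \sum_(j <= i < n.+2) (i.+1)%:R * st n.+1 i.+1 * rr c j i.+1
   = c * \sum_(j.+1 <= m < n.+2) st n.+1 m * rr c j m.
  have -> : \sum_(j <= i < n.+2) (i.+1)%:R * st n.+1 i.+1 * rr c j i.+1
        = \sum_(j.+1 <= i < n.+3) (i%:R * st n.+1 i * rr c j i).
    by rewrite big_add1.
  rewrite (@big_nat_recr _ _ _ n.+2 j.+1) /=; last by lia.
  rewrite (@st_gt n.+1 n.+2 (ltnSn _)) mulr0 mul0r addr0.
  rewrite mulr_sumr -sumrB big_nat_cond [RHS]big_nat_cond.
  apply: eq_bigr => i /andP[/andP[hi _] _].
  rewrite rr_S //; ring.
by rewrite addrC.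
Qed.
Local Open Scope ring_scope.

Lemma natS_neq0 n : (n.+1)%:R != 0 :> rat.
Proof. by rewrite pnatr_eq0. Qed.

Lemma rr_fact j k : rr (j.+1)%:R j (j.+1 + k) =
  (((j.+1 + k) + j)`!)%:R / (((2 * j+1)`!)%:R).
Proof.
elim: k => [|k IH].
  rewrite addn0 rr_j (_ : (j.+1 + j = 2 * j + 1)%N); last by lia.
  by rewrite divff // fact_neq0.
rewrite addnS rr_S; last by lia.
rewrite IH -natrD.
rewrite (_ : ((j.+1 + k).+1 + j)%N = (j.+1 + k + j).+1); last by lia.
rewrite (_ : (j.+1 + (j.+1 + k))%N = (j.+1 + k + j).+1); last by lia.
rewrite factS natrM; ring.
Qed.

Definition FF (m j : nat) : rat := (j`!)%:R * ((m+j)`!)%:R / ((2 * j+1)`!)%:R.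
Definition dd (m : nat) : rat := \sum_(0 <= j < m) FF m j.
Definition GG (m j : nat) : rat := - 2%:R * (j`!)%:R * ((m+j)`!)%:R / ((2 * j)`!)%:R.

Lemma GG_step m j : GG m j.+1 - GG m j =
  FF m j * (3%:R * (m+j+1)%:R - 2%:R * (2 * m+1)%:R).
Proof.
rewrite /GG /FF.
have e1 : (2 * j.+1)`! = ((2 * j).+2 * (2 * j).+1 * (2 * j)`!)%N.
  by rewrite (_ : (2 * j.+1 = (2 * j).+2)%N) ?factS ?mulnA //; lia.
have e2 : (2 * j + 1)`! = ((2 * j).+1 * (2 * j)`!)%N.
  by rewrite addn1 factS.
rewrite e1 e2 factS addnS factS !natrM.
have := fact_neq0 (2 * j); have := natS_neq0 (2 * j); have := natS_neq0 (2 * j).+1.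
move=> h1 h2 h3.
rewrite (_ : (m + j + 1)%:R = (m+j).+1%:R :> rat); last by rewrite addn1.
rewrite -!nat1r.
have h2' : 1 + (2 * j)%:R != 0 :> rat by rewrite nat1r.
have h3' : 1 + (1 + (2 * j)%:R) != 0 :> rat by rewrite !nat1r.
move: h1 h2' h3'; rewrite !natrD => _ h2' h3'.
field.
by move: h2' h3'; rewrite !addr0 => -> ->; rewrite h3.
Qed.

Lemma dd_rec m : dd m.+1 = 2%:R / 3%:R * (2 * m + 1)%:R * dd m + (m`!)%:R.
Proof.
rewrite /dd big_nat_recr //=.
have -> : FF m.+1 m = (m`!)%:R.
  rewrite /FF (_ : (m.+1 + m = 2 * m + 1)%N); last by lia.
  by rewrite mulfK // fact_neq0.
congr (_ + _).
rewrite (eq_bigr (fun j => FF m j * (m + j + 1)%:R)); last first.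
  move=> j _; rewrite /FF addSn factS natrM addn1.
  have := fact_neq0 (2 * j + 1) => h; field.
  by rewrite -addn1 fact_neq0.
have T : \sum_(0 <= j < m) FF m j * (3%:R * (m+j+1)%:R - 2%:R * (2 * m+1)%:R) = 0.
  rewrite -(eq_bigr _ (fun j _ => GG_step m j)) telescope_sumr //.
  rewrite /GG addn0 muln0 fact0 (_ : (m + m)%N = (2 * m)%N); last by lia.
  have := fact_neq0 (2 * m) => h.
  by field.
have T2 : 3%:R * (\sum_(0 <= j < m) FF m j * (m + j + 1)%:R)
          - 2%:R * (2 * m + 1)%:R * (\sum_(0 <= j < m) FF m j) = 0.
  rewrite -[in RHS]T !mulr_sumr -sumrB; apply: eq_bigr => j _; ring.
move: T2; set X := \sum_(0 <= j < m) _; set Y := \sum_(0 <= j < m) _.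
move=> T2.
have h3 : 3%:R != 0 :> rat by [].
apply: (mulfI h3).
have -> : 3%:R * (2%:R / 3%:R * (2 * m + 1)%:R * Y) = 2%:R * (2 * m + 1)%:R * Y.
  by field.
by apply/eqP; rewrite -subr_eq0 T2.
Qed.
Local Open Scope ring_scope.

Definition EE (k : nat) : rat :=
  ((k.+1)`!)%:R * ('C(2 * k.+1, k.+1))%:R / (3%:R ^+ k)
  * (\sum_(0 <= i < k.+1) ((3%:R : rat) ^+ i / ((2 * i + 1)%:R * ('C(2 * i, i))%:R)))
  / 2%:R.

Lemma binC n : ('C(2 * n, n))%:R = ((2 * n)`!)%:R / ((n`!)%:R * (n`!)%:R) :> rat.
Proof.
have h : (n <= 2 * n)%N by lia.
rewrite -(bin_fact h) (_ : (2 * n - n = n)%N); last by lia.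
by rewrite !natrM mulfK // mulf_neq0 // fact_neq0.
Qed.

Lemma EE_rec k : EE k.+1 = 2%:R / 3%:R * (2 * k.+1 + 1)%:R * EE k + ((k.+1)`!)%:R.
Proof.
rewrite /EE (big_nat_recr _ _ _ (leq0n k.+1)).
set X := \sum_(0 <= i < k.+1) _.
rewrite -[Algebra.Algebra_add__canonical__Monoid_Law _ X _]/(X + _).
rewrite !binC exprS.
have e1 : ((2 * k.+2)`!)%:R = ((2 * k.+1).+2)%:R * ((2 * k.+1).+1)%:R * ((2 * k.+1)`!)%:R :> rat.
  by rewrite (_ : (2 * k.+2 = (2 * k.+1).+2)%N) ?factS ?natrM ?mulrA //; lia.
have e2 : ((k.+2)`!)%:R = (k.+2)%:R * ((k.+1)`!)%:R :> rat by rewrite factS natrM.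
rewrite e1 e2.
have h1 := fact_neq0 k.+1; have h2 := fact_neq0 (2 * k.+1).
have h3 : (3%:R : rat) ^+ k != 0 by rewrite expf_neq0.
move: h1 h2; set A := ((2 * k.+1)`!)%:R; set B := ((k.+1)`!)%:R => h1 h2.
have n1 : ((2 * k.+1).+2)%:R = 2%:R * k%:R + 4%:R :> rat.
  by rewrite -natrM -natrD; congr (_%:R); lia.
have n2 : ((2 * k.+1).+1)%:R = 2%:R * k%:R + 3%:R :> rat.
  by rewrite -natrM -natrD; congr (_%:R); lia.
have n3 : (2 * k.+1 + 1)%:R = 2%:R * k%:R + 3%:R :> rat.
  by rewrite -natrM -natrD; congr (_%:R); lia.
have n4 : (k.+2)%:R = k%:R + 2%:R :> rat.
  by rewrite -natrD; congr (_%:R); lia.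
rewrite n1 n2 n3 n4.
have p1 : 2%:R * k%:R + 3%:R != 0 :> rat by rewrite -n2 natS_neq0.
have p2 : 2%:R * k%:R + 4%:R != 0 :> rat by rewrite -n1 natS_neq0.
have p3 : k%:R + 2%:R != 0 :> rat by rewrite -n4 natS_neq0.
field.
by rewrite h3 p1 p3 -/A -/B h1 h2.
Qed.
Local Open Scope ring_scope.

Lemma dd_EE k : dd k.+1 = EE k.
Proof.
elim: k => [|k IH].
  rewrite /dd /EE /FF !big_nat1 /=.
  by apply/eqP.
by rewrite dd_rec IH EE_rec.
Qed.

Lemma tri (G : nat -> nat -> rat) N :
  \sum_(0 <= j < N) \sum_(j.+1 <= m < N.+1) G j m =
  \sum_(1 <= m < N.+1) \sum_(0 <= j < m) G j m.
Proof.
elim: N => [|N IH]; first by rewrite !big_geq.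
rewrite (@big_nat_recr _ _ _ N.+1 1) // -IH.
rewrite big_nat_cond.
rewrite (eq_bigr (fun j => \sum_(j.+1 <= m < N.+1) G j m + G j N.+1)); last first.
  move=> j /andP[/andP[_ hj] _]; rewrite big_nat_recr //.
rewrite -big_nat_cond big_split /=.
congr (_ + _).
by rewrite big_nat_recr //= [X in _ + X]big_geq // addr0.
Qed.

Lemma widen_sum (f : nat -> rat) a N : (a <= N)%N ->
  (forall j, (a <= j)%N -> f j = 0) ->
  \sum_(0 <= j < a) f j = \sum_(0 <= j < N) f j.
Proof.
move=> aN hf; rewrite (@big_cat_nat _ _ _ a 0 N) //=.
rewrite [X in _ = _ + X]big1_seq ?addr0 // => j; rewrite mem_index_iota.
by case/and3P=> _ h _; apply: hf.
Qed.

Lemma swap_sum (F : nat -> nat -> rat) n :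
  \sum_(0 <= a < n) \sum_(0 <= j < n) F a j = \sum_(0 <= j < n) \sum_(0 <= a < n) F a j.
Proof. exact: exchange_big_nat. Qed.

Theorem corollary3p6 (n : nat) :
  \sum_(0 <= k < n.+1) polyBernoulli (n - k) (- (k%:Z)) =
  ((-1) ^+ n.+1 / 2%:R) *
  \sum_(1 <= j < n.+2)
     ((-1) ^+ j * (j`!)%:R * (stirling2 n.+1 j)%:R
      * ('C(2 * j, j))%:R / (3%:R ^+ j.-1)
      * \sum_(0 <= i < j)
           ((3%:R : rat) ^+ i / ((2 * i + 1)%:R * ('C(2 * i, i))%:R))).
Proof.
rewrite big_nat_rev add0n.
rewrite big_nat_cond.
rewrite (eq_bigr (fun a => \sum_(0 <= j < n.+1)
     (j`!)%:R * st a j * ((j.+1)%:R ^+ (n - a)))); last first.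
  move=> a /andP[/andP[_ ha] _].
  rewrite subSS subKn; last by lia.
  rewrite PB; apply: widen_sum => // j hj.
  by rewrite st_gt ?mulr0 ?mul0r.
rewrite -big_nat_cond swap_sum.
rewrite (eq_bigr (fun j => (j`!)%:R *
   \sum_(j.+1 <= m < n.+2) st n.+1 m * rr (j.+1)%:R j m)); last first.
  move=> j _; rewrite -starA mulr_sumr.
  by apply: eq_bigr => a _; rewrite mulrA.
rewrite (eq_bigr (fun j => \sum_(j.+1 <= m < n.+2) st n.+1 m * FF m j)); last first.
  move=> j _; rewrite mulr_sumr big_nat_cond [RHS]big_nat_cond; apply: eq_bigr => m /andP[/andP[hm _] _].
  have -> : m = (j.+1 + (m - j.+1))%N by lia.
  rewrite rr_fact /FF; ring.
rewrite tri mulr_sumr big_nat_cond [RHS]big_nat_cond.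
apply: eq_bigr => m /andP[/andP[hm _] _].
rewrite -mulr_sumr.
case: m hm => // k _.
rewrite -/(dd k.+1) dd_EE /EE /st /=.
rewrite exprD.
have h2 : 2%:R != 0 :> rat by [].
have h3 : (3%:R : rat) ^+ k != 0 by rewrite expf_neq0.
field; exact: h3.
Qed.
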